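(* Let $P$ be a finite poset and $q$ a positive integer such that every chain of $P$ has at most $q$ elements. Then the restriction function $R(p)=\{k\in\mathbb{Z}:1+\delta(p)\le k\le q-\nu(p)\}$ is consistent.
   Context: For $p\in P$, $\delta(p)$ is the number of elements less than $p$ in a chain of maximum size containing $p$, and $\nu(p)$ is the number of elements greater than $p$ in such a chain. A restriction function assigns to each $p$ a nonempty finite subset of $\mathbb{Z}$; it is consistent if for every cover $x\lessdot y$ in $P$, $\min R(x)<\min R(y)$ and $\max R(x)<\max R(y)$. *)

(* Defs.v *)
From HB Require Import structures.
From mathcomp Require Import all_boot all_order all_algebra.
From mathcomp Require Import finmap.
Set Implicit Arguments. Unset Strict Implicit. Unset Printing Implicit Defensive.
Import Order.TTheory GRing.Theory Num.Theory.

Local Open Scope order_scope.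

Section Poset.
Context {d : Order.disp_t} {P : finPOrderType d}.

Definition is_chain (C : {set P}) : bool :=
  [forall x in C, forall y in C, (x <= y) || (y <= x)].

Definition covers (x y : P) : bool :=
  (x < y) && [forall z, ~~ ((x < z) && (z < y))].

(* a chain of maximum size among the chains containing p
   (the singleton [set p] is such a chain, used as witness) *)
Definition max_chain_through (p : P) : {set P} :=
  [arg max_(C > [set p] | is_chain C && (p \in C)) #|C|]%N.

Definition delta (p : P) : nat := #|[set x in max_chain_through p | x < p]|.
Definition nu (p : P) : nat := #|[set x in max_chain_through p | p < x]|.

End Poset.

Local Open Scope ring_scope.
Local Open Scope fset_scope.

Definition restriction_function {d : Order.disp_t} {P : finPOrderType d}
  (R : P -> {fset int}) : Prop := forall p, R p != fset0.

Definition is_min_of (S : {fset int}) (m : int) : Prop :=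
  m \in S /\ forall k, k \in S -> m <= k.
Definition is_max_of (S : {fset int}) (m : int) : Prop :=
  m \in S /\ forall k, k \in S -> k <= m.

Definition consistent {d : Order.disp_t} {P : finPOrderType d}
  (R : P -> {fset int}) : Prop :=
  forall x y : P, covers x y ->
    (forall mx my, is_min_of (R x) mx -> is_min_of (R y) my -> mx < my) /\
    (forall Mx My, is_max_of (R x) Mx -> is_max_of (R y) My -> Mx < My).

(* Main.v *)
Require Import Defs.
From HB Require Import structures.
From mathcomp Require Import all_boot all_order all_algebra.
From mathcomp Require Import finmap.
From mathcomp Require Import zify.
Import Order.TTheory GRing.Theory Num.Theory.

Section Aux.
Context {d : Order.disp_t} {P : finPOrderType d}.
Local Open Scope order_scope.

Lemma chainP (C : {set P}) :
  reflect (forall x y, x \in C -> y \in C -> (x <= y) || (y <= x)) (is_chain C).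
Proof.
apply: (iffP forall_inP) => [H x y hx hy|H x hx].
  by move/forall_inP: (H x hx); apply.
by apply/forall_inP => y hy; apply: H.
Qed.

Lemma mct_spec (p : P) : [/\ is_chain (max_chain_through p), p \in max_chain_through p &
  forall C, is_chain C -> p \in C -> (#|C| <= #|max_chain_through p|)%N].
Proof.
rewrite /max_chain_through; case: arg_maxnP => [|C /andP[Hc Hp] Hmax].
  rewrite set11 andbT; apply/chainP => x y; rewrite !inE => /eqP-> /eqP->.
  by rewrite lexx.
split=> // C' h1 h2; apply: Hmax; by rewrite h1 h2.
Qed.

Lemma card_mct (p : P) : #|max_chain_through p| = (delta p + nu p + 1)%N.
Proof.
have [Hc Hp _] := mct_spec p.
set C := max_chain_through p.
rewrite (cardsD1 p) Hp.
have -> : C :\ p = [set x in C | x < p] :|: [set x in C | p < x].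
  apply/setP => x; rewrite !inE.
  case xC: (x \in C); rewrite ?andbF ?andbT //=.
  have hc : x >=< p by move/chainP: Hc; apply.
  by case: (comparable_ltgtP hc).
rewrite cardsU.
have -> : [set x in C | x < p] :&: [set x in C | p < x] = set0.
  apply/setP => x; rewrite !inE; apply/negbTE.
  by apply/negP => /and3P[/andP[_ h1] _ h2]; move: (lt_trans h1 h2); rewrite ltxx.
rewrite cards0 subn0 /delta /nu -/C; lia.
Qed.

Lemma mono (x y : P) : x < y -> (delta x < delta y)%N /\ (nu y < nu x)%N.
Proof.
move=> xy.
have [Hcx Hx Mx] := mct_spec x.
have [Hcy Hy My] := mct_spec y.
set Cx := max_chain_through x in Hcx Hx Mx.
set Cy := max_chain_through y in Hcy Hy My.
set A := [set z in Cx | z <= x].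
set B := [set z in Cy | y <= z].
have cA : #|A| = (delta x).+1.
  have -> : A = x |: [set z in Cx | z < x].
    apply/setP => z; rewrite !inE le_eqVlt.
    by case: eqP => [->|]; rewrite ?Hx ?andbT //=.
  by rewrite cardsU1 !inE ltxx andbF.
have cB : #|B| = (nu y).+1.
  have -> : B = y |: [set z in Cy | y < z].
    apply/setP => z; rewrite !inE le_eqVlt.
    by case: (eqVneq z y) => [->|hz]; rewrite ?Hy ?eqxx ?andbT //= eq_sym (negbTE hz).
  by rewrite cardsU1 !inE ltxx andbF.
have ch : is_chain (A :|: B).
  apply/chainP => a b; rewrite !inE.
  move=> /orP[/andP[ha1 ha2]|/andP[ha1 ha2]] /orP[/andP[hb1 hb2]|/andP[hb1 hb2]].
  - by move/chainP: Hcx; apply.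
  - by rewrite (le_trans ha2 (le_trans (ltW xy) hb2)).
  - by rewrite (le_trans hb2 (le_trans (ltW xy) ha2)) orbT.
  - by move/chainP: Hcy; apply.
have cU : #|A :|: B| = ((delta x).+1 + (nu y).+1)%N.
  rewrite cardsU cA cB.
  have -> : A :&: B = set0.
    apply/setP => z; rewrite !inE; apply/negbTE; apply/negP.
    move=> /andP[/andP[_ h1] /andP[_ h2]].
    by move: (lt_le_trans xy (le_trans h2 h1)); rewrite ltxx.
  by rewrite cards0 subn0.
have xin : x \in A :|: B by rewrite !inE Hx lexx.
have yin : y \in A :|: B by rewrite !inE Hy lexx orbT.
have h1 := Mx _ ch xin.
have h2 := My _ ch yin.
rewrite cU card_mct in h1; rewrite cU card_mct in h2.
split; lia.
Qed.

End Aux.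

Local Open Scope ring_scope.

Theorem lemma2p18 (d : Order.disp_t) (P : finPOrderType d) (q : nat)
  (q_pos : (0 < q)%N)
  (chains_bounded : forall C : {set P}, is_chain C -> (#|C| <= q)%N)
  (R : P -> {fset int})
  (R_def : forall (p : P) (k : int),
     k \in R p = ((1 + (delta p)%:Z <= k) && (k <= q%:Z - (nu p)%:Z))) :
  restriction_function R /\ consistent R.
Proof.
have bnd (p : P) : (delta p + nu p + 1 <= q)%N.
  have [Hc _ _] := mct_spec p; by have := chains_bounded _ Hc; rewrite card_mct.
have mR (p : P) : (1 + (delta p)%:Z) \in R p.
  rewrite R_def; apply/andP; split; have := bnd p; lia.
have MR (p : P) : (q%:Z - (nu p)%:Z) \in R p.
  rewrite R_def; apply/andP; split; have := bnd p; lia.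
have minE (p : P) m : is_min_of (R p) m -> m = 1 + (delta p)%:Z.
  move=> [Hin Hle]; have := Hle _ (mR p); rewrite R_def in Hin.
  move/andP: Hin => [h1 h2]; lia.
have maxE (p : P) m : is_max_of (R p) m -> m = q%:Z - (nu p)%:Z.
  move=> [Hin Hle]; have := Hle _ (MR p); rewrite R_def in Hin.
  move/andP: Hin => [h1 h2]; lia.
split.
  move=> p; apply/eqP => H; have := mR p; by rewrite H in_fset0.
move=> x y /andP[xy _]; have [h1 h2] := mono _ _ xy.
split.
  move=> mx my /minE-> /minE->; lia.
move=> Mx My /maxE-> /maxE->; lia.
Qed.
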